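(* For every base $b\ge 2$ there exist infinitely many (distinct) arithmetic progressions of length $b$ all of whose terms are $b$-wARH numbers.
   Context: Fix a base $b\ge 2$. $s_b(N)$ is the sum of the base-$b$ digits of $N$. For a positive integer $X$, its reversal $X^R$ is the integer whose base-$b$ representation is that of $X$ written in reverse order (leading zeros of the result are dropped). A positive integer $N$ is a $b$-wARH number if there exists an integer $A\ge 0$ such that $N=(A+s_b(N))+(A+s_b(N))^R$. *)

(* Defs.v *)
From mathcomp Require Import all_boot.
Set Implicit Arguments. Unset Strict Implicit. Unset Printing Implicit Defensive.

(* Base-b digits of n, least significant first, no leading zeros
   (digits b 0 = [::]). Fuel n suffices since n %/ b < n for b >= 2, n > 0. *)
Fixpoint digits_aux (b fuel n : nat) : seq nat :=
  match fuel with
  | 0 => [::]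
  | fuel'.+1 => if n == 0 then [::] else (n %% b) :: digits_aux b fuel' (n %/ b)
  end.

Definition digits (b n : nat) : seq nat := digits_aux b n n.

Definition from_digits (b : nat) (s : seq nat) : nat :=
  foldr (fun d acc => d + b * acc) 0 s.

Definition sdig (b n : nat) : nat := sumn (digits b n).

(* X^R: reverse the base-b representation; leading zeros of the result
   vanish automatically when evaluated. *)
Definition rev_b (b n : nat) : nat := from_digits b (rev (digits b n)).

Definition wARH (b N : nat) : Prop :=
  0 < N /\ exists A : nat, N = (A + sdig b N) + rev_b b (A + sdig b N).

(* Main.v *)
Require Import Defs.
From mathcomp Require Import all_boot.
From mathcomp Require Import zify.

Lemma from_cat b s t : from_digits b (s ++ t) = from_digits b s + b ^ size s * from_digits b t.
Proof.
elim: s => [|x s IH] /=; first by rewrite expn0 mul1n.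
rewrite IH expnS; nia.
Qed.

Lemma from_cons b x s : from_digits b (x :: s) = x + b * from_digits b s.
Proof. by []. Qed.

Lemma from_nseq b k : from_digits b (nseq k 0) = 0.
Proof. by elim: k => //= k ->; rewrite muln0. Qed.


Section Aux.
Variable b : nat.
Hypothesis hb : 2 <= b.

Lemma digits_aux_fuel fuel1 fuel2 n :
  n <= fuel1 -> n <= fuel2 -> digits_aux b fuel1 n = digits_aux b fuel2 n.
Proof.
elim: fuel1 fuel2 n => [|f1 IH] [|f2] n /= h1 h2.
- by [].
- by move: h1; rewrite leqn0 => /eqP ->.
- by move: h2; rewrite leqn0 => /eqP ->.
case: eqP => // /eqP nz; congr (_ :: _); apply: IH.
- have : n %/ b < n by apply: ltn_Pdiv => //; lia.
  lia.
- have : n %/ b < n by apply: ltn_Pdiv => //; lia.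
  lia.
Qed.

Lemma digitsE n : digits b n = if n == 0 then [::] else n %% b :: digits b (n %/ b).
Proof.
rewrite /digits; case: n => [|n] //=.
congr (_ :: _); apply: digits_aux_fuel => //.
have : n.+1 %/ b < n.+1 by apply: ltn_Pdiv => //; lia.
lia.
Qed.

Definition valid (s : seq nat) := all (fun x => x < b) s && (last 1 s != 0).

Lemma digits_from s : valid s -> digits b (from_digits b s) = s.
Proof.
elim: s => [|x t IH] //= /andP [/andP [xb alt] lt].
have vt : valid t.
  apply/andP; split; first exact: alt.
  by case: t {IH alt} lt.
have IH' := IH vt.
rewrite digitsE.
case: eqP => [h0|/eqP nz].
- have x0 : x = 0 by lia.
  have w0 : from_digits b t = 0 by move: h0; case: (from_digits b t) => // w; rewrite mulnS; lia.
  move: IH'; rewrite w0 /digits /= => tn; subst t; move: lt; rewrite /= x0 //.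
- rewrite [b * _]mulnC addnC modnMDl divnMDl; last lia.
  by rewrite modn_small // divn_small // addn0 IH'.
Qed.

Lemma key (X L : seq nat) (n : nat) : valid X -> valid L ->
  n = from_digits b L -> from_digits b X + from_digits b (rev X) = n ->
  sumn L <= from_digits b X -> 0 < n -> wARH b n.
Proof.
move=> vX vL nL eX le n0; split => //.
exists (from_digits b X - sumn L).
have -> : sdig b n = sumn L by rewrite /sdig nL digits_from.
rewrite subnK // /rev_b digits_from //.
Qed.

End Aux.

Theorem corollary7 (b : nat) (hb : 2 <= b) :
  forall N : nat, exists a d : nat,
    [/\ 0 < d, N <= a + d & forall i : nat, i < b -> wARH b (a + i * d)].
Proof.
move=> N.
set m := (N + 2).
have Bm : m < b ^ m by apply: ltn_expl; lia.
have Bm1 : b ^ m = b * b ^ m.-1 by rewrite -expnS /m addn2.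
exists (b ^ m + 1), (b ^ m + 1); split; [lia | lia | ].
move=> i ib.
have [ilt | ieq] : i.+1 < b \/ i.+1 = b by lia.
- apply: (@key b hb (nseq m 0 ++ [:: i.+1])
              (i.+1 :: nseq m.-1 0 ++ [:: i.+1])).
  + rewrite /valid all_cat all_nseq /= cats1 last_rcons; lia.
  + rewrite /valid /= all_cat all_nseq /= cats1 last_rcons /=; lia.
  + rewrite from_cons from_cat from_nseq size_nseq /= Bm1; nia.
  + rewrite rev_cat !from_cat rev_nseq !from_nseq size_nseq /=; nia.
  + rewrite /= sumn_cat /= sumn_nseq from_cat from_nseq size_nseq from_cons /=.
    have : 2 <= b ^ m by lia.
    nia.
  + lia.
- apply: (@key b hb ([:: 1] ++ nseq m.-1 0 ++ [:: b.-1])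
              ([:: 0; 1] ++ nseq m.-1 0 ++ [:: 1])).
  + rewrite /valid /= all_cat all_nseq /= cats1 last_rcons; lia.
  + rewrite /valid /= all_cat all_nseq /= cats1 last_rcons /=; lia.
  + rewrite !from_cat from_nseq size_nseq /= Bm1; nia.
  + rewrite !rev_cat !from_cat rev_nseq !from_nseq !size_cat size_nseq /= expn1 (_ : 1 + m.-1 = m); [rewrite Bm1; nia | lia].
  + rewrite !sumn_cat sumn_nseq !from_cat from_nseq size_nseq /=.
    have : 1 <= b ^ m.-1 by rewrite expn_gt0; lia.
    nia.
  + lia.
Qed.
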